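(* Let $\tilde q=q^2$. For all integers $v\geq 1$ and $L\geq 0$, \[ \sum_{n_1,\ldots,n_v\geq 0} \frac{\tilde q^{\sum_{i=1}^v N_i(N_i+1)+n_v}}{(\tilde q)_{n_1}\cdots(\tilde q)_{n_{v-1}}(\tilde q)_{2n_v+1}}\,\frac{(q^3;q^6)_{n_v}}{(q;q^2)_{n_v}}\,\frac{(\tilde q)_{2L+1}}{(\tilde q)_{L-N_1}} =\sum_{j=-\infty}^{\infty} (-1)^j q^{(2v+1)j^2+2vj-1}\left(\frac{j}{3}\right){2L+1 \brack L-j}_{\tilde q}, \] where $N_i=n_i+n_{i+1}+\cdots+n_v$ for $i=1,\ldots,v$ (for $v=1$ the product $(\tilde q)_{n_1}\cdots(\tilde q)_{n_{v-1}}$ is empty).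
   Context: For a variable $a$ and integer $n\ge 0$, $(a;q)_n=(1-a)(1-aq)\cdots(1-aq^{n-1})$, and $(\tilde q)_n=(\tilde q;\tilde q)_n$; by convention $1/(\tilde q)_n=0$ for negative integers $n$. The $q$-binomial coefficient in base $\tilde q$ is ${A \brack B}_{\tilde q}=\frac{(\tilde q;\tilde q)_A}{(\tilde q;\tilde q)_B(\tilde q;\tilde q)_{A-B}}$ if $0\le B\le A$ are integers, and $0$ otherwise. $\left(\frac{j}{3}\right)$ is the Legendre symbol modulo 3: it equals $1$ if $j\equiv 1 \pmod 3$, $-1$ if $j\equiv -1\pmod 3$, and $0$ if $3\mid j$. *)

(* Defs.v *)
From HB Require Import structures.
From mathcomp Require Import all_boot all_order all_algebra.
Set Implicit Arguments. Unset Strict Implicit. Unset Printing Implicit Defensive.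
Import Order.TTheory GRing.Theory Num.Theory.
Local Open Scope ring_scope.

Definition qpoch (R : ringType) (a q : R) (n : nat) : R :=
  \prod_(i < n) (1 - a * q ^+ i).

Definition qfac (R : ringType) (qt : R) (n : nat) : R := qpoch qt qt n.

(* 1/(qt)_n, with the convention 1/(qt)_n = 0 for negative n *)
Definition inv_qfac (R : unitRingType) (qt : R) (n : int) : R :=
  match n with Posz m => (qfac qt m)^-1 | Negz _ => 0 end.

Definition qbinom (R : unitRingType) (qt : R) (A B : int) : R :=
  match A, B with
  | Posz a, Posz b =>
      if (b <= a)%N then qfac qt a / (qfac qt b * qfac qt (a - b)) else 0
  | _, _ => 0
  end.

Definition leg3 (R : ringType) (j : int) : R :=
  if (j %% 3)%Z == 1 then 1 else if (j %% 3)%Z == 2 then -1 else 0.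

(* extend a finite family n_0..n_(v-1) (0-indexed) to nat -> nat by zero *)
Definition ext (v L : nat) (f : {ffun 'I_v -> 'I_L.+1}) (k : nat) : nat :=
  match insub k with Some i => nat_of_ord (f i) | None => 0%N end.

(* N_(i+1) = n_(i+1) + ... + n_v  (0-indexed: sum over i <= k < v) *)
Definition Nsum (v : nat) (n : nat -> nat) (i : nat) : nat :=
  (\sum_(i <= k < v) n k)%N.

(* summand of the left-hand side; n_v is n (v-1) *)
Definition lhs_term (R : unitRingType) (q : R) (v L : nat) (n : nat -> nat) : R :=
  let qt := q ^+ 2 in
  let nv := n v.-1 in
  qt ^+ ((\sum_(i < v) Nsum v n i * (Nsum v n i).+1) + nv)%N
  / ((\prod_(i < v.-1) qfac qt (n i)) * qfac qt (2 * nv + 1))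
  * (qpoch (q ^+ 3) (q ^+ 6) nv / qpoch q (q ^+ 2) nv)
  * (qfac qt (2 * L + 1) * inv_qfac qt (L%:Z - (Nsum v n 0)%:Z)).

Definition rhs_term (R : unitRingType) (q : R) (v L : nat) (j : int) : R :=
  (-1) ^ j * q ^ ((2 * v + 1)%:Z * j ^+ 2 + (2 * v)%:Z * j - 1)
  * leg3 R j * qbinom (q ^+ 2) (2 * L + 1)%:Z (L%:Z - j).

(* Main.v *)
Require Import Defs.
From HB Require Import structures.
From mathcomp Require Import all_boot all_order all_algebra.
From mathcomp Require Import ring zify.
From Stdlib Require Import FunctionalExtensionality.
Set Implicit Arguments. Unset Strict Implicit. Unset Printing Implicit Defensive.
Import Order.TTheory GRing.Theory Num.Theory.
Local Open Scope ring_scope.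
Section S.
Variable R : fieldType.
Variable q : R.
Hypothesis hq : q != 0.
Hypothesis hroot : forall k : nat, (0 < k)%N -> q ^+ k != 1.

Local Notation p := (q ^+ 2).

Lemma qpow_neq0 (k : nat) : q ^+ k != 0.
Proof. exact: expf_neq0. Qed.

Lemma one_sub_qpow_neq0 (k : nat) : (0 < k)%N -> 1 - q ^+ k != 0.
Proof. by move=> hk; rewrite subr_eq0 eq_sym; apply: hroot. Qed.

Lemma qfacS n : qfac p n.+1 = qfac p n * (1 - p ^+ n.+1).
Proof. by rewrite /qfac /qpoch big_ord_recr /= [p ^+ n.+1]exprS. Qed.

Lemma qfac0 : qfac p 0 = 1.
Proof. by rewrite /qfac /qpoch big_ord0. Qed.

Lemma qfac_neq0 n : qfac p n != 0.
Proof.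
elim: n => [|n IH]; first by rewrite qfac0 oner_neq0.
rewrite qfacS mulf_neq0 // -exprM; apply: one_sub_qpow_neq0.
by rewrite muln_gt0.
Qed.

Definition W (n : nat) : R := (qfac p n)^-1.

Lemma W_neq0 n : W n != 0.
Proof. by rewrite invr_neq0 // qfac_neq0. Qed.

Definition qb (n : nat) (k : int) : R := qbinom p n%:Z k.

Lemma qb_nat n k : (k <= n)%N -> qb n k%:Z = qfac p n * W k * W (n - k).
Proof. by move=> hk; rewrite /qb /qbinom hk /W invfM mulrA. Qed.

Lemma qb_gt n k : (n < k)%N -> qb n k%:Z = 0.
Proof. by move=> hk; rewrite /qb /qbinom leqNgt hk. Qed.

Lemma qb_neg n k : qb n (Negz k) = 0.
Proof. by []. Qed.

Lemma qb0 n : qb n 0 = 1.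
Proof. by rewrite qb_nat // subn0 /W qfac0 invr1 mulr1 mulfV ?qfac_neq0. Qed.

Lemma qbnn n : qb n n%:Z = 1.
Proof. by rewrite qb_nat // subnn /W qfac0 invr1 mulr1 mulfV ?qfac_neq0. Qed.

Lemma qb_sym n k : (k <= n)%N -> qb n (n - k)%N%:Z = qb n k%:Z.
Proof.
move=> hk; rewrite !qb_nat ?leq_subr // subKn //.
by rewrite -!mulrA [W (n-k) * _]mulrC.
Qed.

Lemma Posz_pred (k : nat) : (k.+1%:Z - 1 = k%:Z)%R.
Proof. by rewrite -addn1 PoszD addrK. Qed.

Lemma qb_pascal1 n k :
  qb n.+1 k = qb n k + q ^ (2 * (n.+1%:Z - k)) * qb n (k - 1).
Proof.
case: k => [[|k]|k].
- by rewrite qb0 qb0 (_ : (0:int) - 1 = Negz 0) // qb_neg mulr0 addr0.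
- rewrite Posz_pred.
  case: (leqP k.+1 n) => hkn.
  +
    have [d ->] : exists d, n = (k.+1 + d)%N by exists (n - k.+1)%N; rewrite subnKC.
    rewrite !qb_nat //; try lia.
    rewrite (_ : 2 * ((k.+1 + d).+1%:Z - k.+1%:Z) = (2 * d.+1)%N%:Z); last first.
      by lia.
    rewrite -exprnP.
    rewrite (_ : ((k.+1 + d).+1 - k.+1 = d.+1)%N); last by lia.
    rewrite (_ : ((k.+1 + d) - k.+1 = d)%N); last by lia.
    rewrite (_ : ((k.+1 + d) - k = d.+1)%N); last by lia.
    rewrite qfacS /W qfacS qfacS.
    rewrite (_ : (k.+1 + d).+1 = k.+1 + d.+1)%N; last by lia.
    rewrite exprM exprD.
    have h1 := qfac_neq0 k. have h2 := qfac_neq0 d. have h3 := qfac_neq0 (k.+1 + d).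
    have h4 : 1 - p ^+ k.+1 != 0 by rewrite -exprM one_sub_qpow_neq0 // muln_gt0.
    have h5 : 1 - p ^+ d.+1 != 0 by rewrite -exprM one_sub_qpow_neq0 // muln_gt0.
    move: h1 h2 h3 h4 h5.
    set x := p ^+ k.+1; set y := p ^+ d.+1.
    set A := qfac p k; set B := qfac p d; set C := qfac p (k.+1 + d).
    move=> h1 h2 h3 h4 h5.
    field.
    by rewrite h1 h2 h4 h5.
  + case: (ltngtP n k) => h'; last first.
    * subst n. rewrite qbnn qb_gt // qbnn add0r.
      by rewrite subrr mulr0 expr0z mul1r.
    * lia.
    * by rewrite !qb_gt // ?mulr0 ?addr0 //; lia.
- by rewrite !qb_neg ?mulr0 ?addr0.
Qed.


Lemma qb_pascal2 n k :
  qb n.+1 k = q ^ (2 * k) * qb n k + qb n (k - 1).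
Proof.
case: k => [[|k]|k].
- by rewrite qb0 qb0 (_ : (0:int) - 1 = Negz 0) // qb_neg mulr0 expr0z mul1r addr0.
- rewrite Posz_pred.
  case: (leqP k.+1 n) => hkn.
  + have [d ->] : exists d, n = (k.+1 + d)%N by exists (n - k.+1)%N; rewrite subnKC.
    rewrite !qb_nat //; try lia.
    rewrite (_ : 2 * k.+1%:Z = (2 * k.+1)%N%:Z); last by lia.
    rewrite -exprnP.
    rewrite (_ : ((k.+1 + d).+1 - k.+1 = d.+1)%N); last by lia.
    rewrite (_ : ((k.+1 + d) - k.+1 = d)%N); last by lia.
    rewrite (_ : ((k.+1 + d) - k = d.+1)%N); last by lia.
    rewrite qfacS /W qfacS qfacS.
    rewrite (_ : (k.+1 + d).+1 = k.+1 + d.+1)%N; last by lia.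
    rewrite exprM exprD.
    have h1 := qfac_neq0 k. have h2 := qfac_neq0 d. have h3 := qfac_neq0 (k.+1 + d).
    have h4 : 1 - p ^+ k.+1 != 0 by rewrite -exprM one_sub_qpow_neq0 // muln_gt0.
    have h5 : 1 - p ^+ d.+1 != 0 by rewrite -exprM one_sub_qpow_neq0 // muln_gt0.
    move: h1 h2 h3 h4 h5.
    set x := p ^+ k.+1; set y := p ^+ d.+1.
    set A := qfac p k; set B := qfac p d; set C := qfac p (k.+1 + d).
    move=> h1 h2 h3 h4 h5.
    field.
    by rewrite h1 h2 h4 h5.
  + case: (ltngtP n k) => h'; last first.
    * subst n. rewrite qbnn qb_gt // qbnn mulr0 add0r //.
    * lia.
    * by rewrite !qb_gt // ?mulr0 ?addr0 //; lia.
- by rewrite !qb_neg ?mulr0 ?addr0.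
Qed.

Lemma qb_pascal3 n k :
  qb n.+2 k = q ^ (2 * k) * qb n k + (1 + q ^+ (2 * n.+1)) * qb n (k - 1)
              + q ^ (2 * (n.+2%:Z - k)) * qb n (k - 2).
Proof.
rewrite qb_pascal2 qb_pascal1 qb_pascal1.
rewrite (_ : k - 1 - 1 = k - 2); last by ring.
rewrite (_ : 2 * (n.+1%:Z - (k - 1)) = 2 * (n.+2%:Z - k)); last by lia.
rewrite mulrDr mulrA -expfzDr //.
rewrite (_ : 2 * k + 2 * (n.+1%:Z - k) = (2 * n.+1)%N%:Z); last by lia.
rewrite -exprnP. ring.
Qed.



Lemma m1_neq0 : (-1 : R) != 0.
Proof. by rewrite oppr_eq0 oner_eq0. Qed.

Lemma sgnS (j : int) : (-1 : R) ^ (j + 1) = - (-1) ^ j.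
Proof. by rewrite expfzDr ?m1_neq0 // -exprnP expr1 mulrN1. Qed.

Lemma leg3_mod (j c : int) : leg3 R (j + c) = leg3 R ((j %% 3)%Z + c).
Proof. by rewrite /leg3 modzDml. Qed.

Lemma mod3_cases (j : int) : [\/ (j %% 3)%Z = 0, (j %% 3)%Z = 1 | (j %% 3)%Z = 2].
Proof.
have h0 := modz_ge0 j (isT : (3:int) != 0).
have h1 := ltz_pmod j (isT : (0:int) < 3).
move: h0 h1; set r := (j %% 3)%Z => h0 h1.
have : (r == 0) || (r == 1) || (r == 2) by lia.
by case/orP => [/orP[]|] /eqP ->; [apply: Or31 | apply: Or32 | apply: Or33].
Qed.

Lemma leg3_sum (j : int) : leg3 R (j - 1) + leg3 R j + leg3 R (j + 1) = 0.
Proof.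
rewrite (leg3_mod j (-1)) (leg3_mod j 1) -{2}(addr0 j) (leg3_mod j 0).
case: (mod3_cases j) => ->; rewrite /leg3 /=; 
  rewrite ?eqxx ?addr0 ?add0r ?subrr ?addrN //=; ring.
Qed.

Definition wb (j : int) : R := - ((-1) ^ j * leg3 R j).
Definition wa (j : int) : R := - wb (j - 1).

Lemma wa_S j : wa (j + 1) = - wb j.
Proof. by rewrite /wa addrK. Qed.

Lemma wb_S j : wb (j + 1) = wa j + wb j.
Proof.
rewrite /wa /wb sgnS.
have e : (-1 : R) ^ j = - (-1) ^ (j - 1) by rewrite -sgnS subrK.
have := leg3_sum j.
rewrite e. move=> hs.
have -> : leg3 R (j + 1) = - leg3 R (j - 1) - leg3 R j.
  by apply: (addrI (leg3 R (j - 1) + leg3 R j)); rewrite hs; ring.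
ring.
Qed.

Lemma wa_P j : wa (j - 1) = wa j + wb j.
Proof.
have := wb_S (j - 1). rewrite subrK => ->.
rewrite /wa; ring.
Qed.

Lemma wb_P j : wb (j - 1) = - wa j.
Proof. by rewrite /wa opprK. Qed.

Definition hh (m : nat) (j : int) : R := q ^ (j * j) * qb (2 * m).+1 (m%:Z - j).

Lemma qb_out n (z : int) : (z < 0) || (n%:Z < z) -> qb n z = 0.
Proof.
case: z => [k|k] /=; last by rewrite qb_neg.
move=> h; rewrite qb_gt //; lia.
Qed.

Lemma hh_rec m j :
  hh m.+1 j = q ^+ (2 * m).+1 * hh m (j - 1) + (1 + q ^+ (4 * m + 4)) * hh m j
              + q ^+ (2 * m + 3) * hh m (j + 1).
Proof.
rewrite /hh.
have -> : (2 * m.+1).+1 = (2 * m).+1.+2 by lia.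
rewrite qb_pascal3.
rewrite (_ : m.+1%:Z - j - 1 = m%:Z - j); last by ring.
rewrite (_ : m.+1%:Z - j - 2 = m%:Z - (j + 1)); last by ring.
rewrite (_ : m.+1%:Z - j = m%:Z - (j - 1)); last by ring.
rewrite (_ : (2 * (2 * m).+2)%N = (4 * m + 4)%N); last by lia.
rewrite !mulrDr !mulrA -!expfzDr //.
rewrite !exprnP -!expfzDr //.
congr (_ + _ + _); [congr (q ^ _ * _); lia | ring | congr (q ^ _ * _); lia].
Qed.

Lemma shift_sum (G : int -> R) (N s M : nat) :
  (forall z : int, z < 0 -> G z = 0) -> (forall t : nat, (N <= t)%N -> G t%:Z = 0) ->
  (N + s <= M)%N -> \sum_(t < M) G (t%:Z - s%:Z) = \sum_(t < N) G t%:Z.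
Proof.
move=> Gneg Gbig.
elim: s M => [|s IH] M hM.
- rewrite addn0 in hM.
  rewrite -(subnKC hM) big_split_ord /=.
  rewrite [X in _ + X]big1 ?addr0; last by move=> i _; rewrite subr0 Gbig // leq_addr.
  by apply: eq_bigr => i _; rewrite subr0.
- case: M hM => [|M] hM; first by lia.
  rewrite big_ord_recl /= Gneg; last by lia.
  rewrite add0r -(IH M); last by lia.
  apply: eq_bigr => i _; congr G.
  rewrite /bump /= add1n. lia.
Qed.

Lemma hh_supp m (j : int) : (j < - (m.+1%:Z)) || (m%:Z < j) -> hh m j = 0.
Proof. move=> h; rewrite /hh qb_out ?mulr0 //; lia. Qed.

Definition Phi (m : nat) (w : int -> R) : R :=
  \sum_(t < (2 * m).+2) hh m (t%:Z - m.+1%:Z) * w (t%:Z - m.+1%:Z).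

Lemma Phi_shift m (w : int -> R) (s : nat) (d : int) :
  (s <= 2)%N ->
  \sum_(t < (2 * m.+1).+2) hh m (t%:Z - m.+2%:Z + s%:Z - 1) * w (t%:Z - m.+2%:Z + d)
  = Phi m (fun i => w (i - s%:Z + 1 + d)).
Proof.
move=> hs.
rewrite /Phi.
pose G := fun k : int => hh m (k - m.+1%:Z) * w (k - m.+1%:Z - s%:Z + 1 + d).
rewrite -(shift_sum (G := G) (N := (2 * m).+2) (s := (2 - s)%N) (M := (2 * m.+1).+2)); first last.
- lia.
- by move=> t ht; rewrite /G hh_supp ?mul0r //; lia.
- by move=> z hz; rewrite /G hh_supp ?mul0r //; lia.
apply: eq_bigr => t _; rewrite /G.
have -> : (2 - s)%N%:Z = 2 - s%:Z by lia.
congr (hh m _ * w _); lia.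
Qed.

Lemma Phi_rec m w :
  Phi m.+1 w = q ^+ (2 * m).+1 * Phi m (fun i => w (i + 1))
    + (1 + q ^+ (4 * m + 4)) * Phi m w + q ^+ (2 * m + 3) * Phi m (fun i => w (i - 1)).
Proof.
have e := Phi_shift m w.
rewrite /Phi.
have hw : forall j x, hh m.+1 j * x = q ^+ (2 * m).+1 * (hh m (j - 1) * x)
    + (1 + q ^+ (4 * m + 4)) * (hh m j * x) + q ^+ (2 * m + 3) * (hh m (j + 1) * x).
  by move=> j x; rewrite hh_rec; ring.
under eq_bigr => t _ do rewrite hw.
rewrite !big_split /= -!mulr_sumr.
congr (_ * _ + _ * _ + _ * _).
- have := e 0%N 0 isT. rewrite /Phi => e'.
  transitivity (\sum_(t < (2 * m.+1).+2) hh m (t%:Z - m.+2%:Z + 0%N%:Z - 1) * w (t%:Z - m.+2%:Z + 0)).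
    by apply: eq_bigr => t _; congr (hh m _ * w _); lia.
  rewrite e'; apply: eq_bigr => t _; congr (_ * w _); lia.
- have := e 1%N 0 isT. rewrite /Phi => e'.
  transitivity (\sum_(t < (2 * m.+1).+2) hh m (t%:Z - m.+2%:Z + 1%N%:Z - 1) * w (t%:Z - m.+2%:Z + 0)).
    by apply: eq_bigr => t _; congr (hh m _ * w _); lia.
  rewrite e'; apply: eq_bigr => t _; congr (_ * w _); lia.
- have := e 2%N 0 isT. rewrite /Phi => e'.
  transitivity (\sum_(t < (2 * m.+1).+2) hh m (t%:Z - m.+2%:Z + 2%N%:Z - 1) * w (t%:Z - m.+2%:Z + 0)).
    by apply: eq_bigr => t _; congr (hh m _ * w _); lia.
  rewrite e'; apply: eq_bigr => t _; congr (_ * w _); lia.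
Qed.

Lemma Phi_ext m (w1 w2 : int -> R) : (forall i, w1 i = w2 i) -> Phi m w1 = Phi m w2.
Proof. by move=> h; apply: eq_bigr => t _; rewrite h. Qed.

Lemma Phi_add m (w1 w2 : int -> R) : Phi m (fun i => w1 i + w2 i) = Phi m w1 + Phi m w2.
Proof. by rewrite /Phi -big_split; apply: eq_bigr => t _; rewrite mulrDr. Qed.

Lemma Phi_opp m (w : int -> R) : Phi m (fun i => - w i) = - Phi m w.
Proof. by rewrite /Phi -sumrN; apply: eq_bigr => t _; rewrite mulrN. Qed.

Definition PP (m : nat) : R := \prod_(i < m) (1 + q ^+ (2 * i).+1 + q ^+ (4 * i + 2)).

Lemma wb_m1 : wb (-1) = -1.
Proof.
rewrite /wb /leg3 /=.
have -> : (-1 : R) ^ (-1) = ((-1) ^+ 1)^-1 by [].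
by rewrite expr1 invrN1 mulrN1 opprK.
Qed.
Lemma wb_0 : wb 0 = 0.
Proof. by rewrite /wb /leg3 /= mulr0 oppr0. Qed.
Lemma wa_0 : wa 0 = 1.
Proof. by rewrite /wa sub0r wb_m1 opprK. Qed.
Lemma wa_m1 : wa (-1) = 1.
Proof. by have := wa_P 0; rewrite sub0r => ->; rewrite wa_0 wb_0 addr0. Qed.

Lemma Phi0 w : Phi 0 w = q * w (-1) + w 0.
Proof.
rewrite /Phi big_ord_recr big_ord_recr big_ord0 /= add0r.
rewrite (_ : 0%N%:Z - 1%N%:Z = -1) // (_ : 1%N%:Z - 1%N%:Z = 0) //.
rewrite /hh /= mul0r expr0z mul1r (_ : 0%N%:Z - -1 = 1) // (_ : 0%N%:Z - 0 = 0) //.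
by rewrite qbnn qb0 mulr1 (_ : (-1 : int) * -1 = 1) // expr1z mul1r.
Qed.

Lemma AB_closed m :
  Phi m wa = PP m * (1 + q ^+ (2 * m).+1) /\ Phi m wb = - (PP m * q ^+ (2 * m).+1).
Proof.
elim: m => [|m [IHa IHb]].
  rewrite !Phi0 /PP big_ord0 wa_m1 wa_0 wb_m1 wb_0 !mul1r muln0 expr1.
  by split; ring.
have ea1 : Phi m (fun i => wa (i + 1)) = - Phi m wb.
  by rewrite -Phi_opp; apply: Phi_ext => i; rewrite wa_S.
have ea2 : Phi m (fun i => wa (i - 1)) = Phi m wa + Phi m wb.
  by rewrite -Phi_add; apply: Phi_ext => i; rewrite wa_P.
have eb1 : Phi m (fun i => wb (i + 1)) = Phi m wa + Phi m wb.
  by rewrite -Phi_add; apply: Phi_ext => i; rewrite wb_S.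
have eb2 : Phi m (fun i => wb (i - 1)) = - Phi m wa.
  by rewrite -Phi_opp; apply: Phi_ext => i; rewrite wb_P.
rewrite !Phi_rec ea1 ea2 eb1 eb2 IHa IHb.
rewrite /PP big_ord_recr /= -/(PP m).
have -> : (2 * m.+1).+1 = ((2 * m).+1 + 2)%N by lia.
have -> : (4 * m + 4 = ((2 * m).+1 + (2 * m).+1) + 2)%N by lia.
have -> : (4 * m + 2 = ((2 * m).+1 + (2 * m).+1))%N by lia.
have -> : (2 * m + 3 = ((2 * m).+1 + 2))%N by lia.
rewrite !exprD.
split; ring.
Qed.

Lemma fold_sum (F : int -> R) L :
  \sum_(t < (2 * L).+2) F (t%:Z - L.+1%:Z) * qb (2 * L).+1 (L%:Z - (t%:Z - L.+1%:Z))
  = \sum_(r < L.+1) (F r%:Z + F (- r%:Z - 1)) * qb (2 * L).+1 (L%:Z - r%:Z).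
Proof.
have -> : (2 * L).+2 = (L.+1 + L.+1)%N by lia.
rewrite big_split_ord /= addrC.
under [RHS]eq_bigr => i _ do rewrite mulrDl.
rewrite big_split /=.
congr (_ + _).
- apply: eq_bigr => i _ /=.
  congr (F _ * qb _ _); lia.
- rewrite (reindex_inj rev_ord_inj) /=.
  apply: eq_bigr => i _ /=.
  have hi := ltn_ord i.
  have -> : (L.+1 - i.+1)%N%:Z - L.+1%:Z = - i%:Z - 1 by lia.
  congr (_ * _).
  have -> : L%:Z - (- i%:Z - 1) = ((2 * L).+1 - (L - i))%N%:Z by lia.
  rewrite qb_sym; last by lia.
  congr qb; lia.
Qed.

Definition cc (j : int) : R := (-1) ^ j * leg3 R j * q ^ (j * j - 1).

Lemma base_sum m :
  \sum_(r < m.+1) (cc r%:Z + cc (- r%:Z - 1)) * qb (2 * m).+1 (m%:Z - r%:Z)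
  = q ^+ (2 * m) * PP m.
Proof.
rewrite -(fold_sum cc).
have e : forall j : int, cc j * qb (2 * m).+1 (m%:Z - j) = - q^-1 * (hh m j * wb j).
  move=> j; rewrite /cc /hh /wb expfzDr //.
  have -> : q ^ (-1) = (q ^+ 1)^-1 by [].
  rewrite expr1; ring.
under eq_bigr => t _ do rewrite e.
rewrite -mulr_sumr.
have := (AB_closed m).2. rewrite /Phi => ->.
have -> : (2 * m).+1 = (1 + 2 * m)%N by lia.
rewrite exprD expr1.
by field.
Qed.

Definition CC (m : nat) : R := qpoch (q ^+ 3) (q ^+ 6) m / qpoch q (q ^+ 2) m.

Lemma qpoch_odd_neq0 m : qpoch q (q ^+ 2) m != 0.
Proof.
rewrite /qpoch; apply/prodf_neq0 => i _.
rewrite -exprM -exprS; apply: one_sub_qpow_neq0.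
by [].
Qed.

Lemma CC_PP m : CC m = PP m.
Proof.
rewrite /CC.
have -> : qpoch (q ^+ 3) (q ^+ 6) m = qpoch q (q ^+ 2) m * PP m.
  rewrite /qpoch /PP -big_split /=; apply: eq_bigr => i _.
  have e1 : q ^+ 3 * (q ^+ 6) ^+ i = q ^+ (3 + 6 * i) by rewrite -(exprM q 6 i) -(exprD q 3 (6 * i)).
  have e2 : (q * (q ^+ 2) ^+ i) ^+ 3 = q ^+ (3 + 6 * i).
    rewrite [LHS]exprMn -(exprM q 2 i) -(exprM q (2 * i) 3) -(exprD q 3 (2 * i * 3)).
    congr (_ ^+ _); lia.
  have e3 : (q * (q ^+ 2) ^+ i) ^+ 2 = q ^+ (4 * i + 2).
    rewrite [LHS]exprMn -(exprM q 2 i) -(exprM q (2 * i) 2) -(exprD q 2 (2 * i * 2)).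
    congr (_ ^+ _); lia.
  have e4 : q * (q ^+ 2) ^+ i = q ^+ (2 * i).+1 by rewrite -(exprM q 2 i) -exprS.
  rewrite e1 -e2 -e3 -e4.
  ring.
by rewrite mulrC mulKf // qpoch_odd_neq0.
Qed.

Definition Bailey (al be : nat -> R) : Prop :=
  forall L, be L = \sum_(r < L.+1) al r * W (L - r) * W (L + r).+1.

Definition al0 (r : nat) : R := cc r%:Z + cc (- r%:Z - 1).
Definition be0 (m : nat) : R := p ^+ m * CC m * W (2 * m).+1.

Lemma base_pair : Bailey al0 be0.
Proof.
move=> m.
have e : forall r : 'I_m.+1, al0 r * W (m - r) * W (m + r).+1
     = W (2 * m).+1 * ((cc r%:Z + cc (- r%:Z - 1)) * qb (2 * m).+1 (m%:Z - r%:Z)).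
  move=> r. have hr := ltn_ord r.
  rewrite (_ : m%:Z - r%:Z = (m - r)%N%:Z); last by lia.
  rewrite qb_nat; last by lia.
  rewrite (_ : ((2 * m).+1 - (m - r))%N = (m + r).+1); last by lia.
  rewrite /al0 /W.
  by field; rewrite ?qfac_neq0.
under eq_bigr => r _ do rewrite e.
rewrite -mulr_sumr base_sum /be0 CC_PP -exprM.
ring.
Qed.

Definition EE (c k n : nat) : R := \prod_(i < n - k) (1 - p ^+ (c + k + 1 + i)).

Lemma Sid n c :
  \sum_(k < n.+1) qb n k%:Z * p ^+ (k * k + c * k) * EE c k n = 1.
Proof.
elim: n c => [|n IH] c.
  by rewrite big_ord_recl big_ord0 qb0 /EE big_ord0 !muln0 expr0 !mulr1 addr0.
rewrite big_ord_recl /=.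
under eq_bigr => k _ do rewrite /bump /= add1n qb_pascal1 Posz_pred mulrDl mulrDl.
rewrite big_split /= addrA.
have hA : qb n.+1 0 * p ^+ (0 * 0 + c * 0) * EE c 0 n.+1
   + \sum_(i < n.+1) qb n i.+1 * p ^+ (i.+1 * i.+1 + c * i.+1) * EE c i.+1 n.+1
   = (1 - p ^+ (c + n.+1)) * \sum_(k < n.+1) qb n k%:Z * p ^+ (k * k + c * k) * EE c k n.
  transitivity (\sum_(k < n.+2) qb n k%:Z * p ^+ (k * k + c * k) * EE c k n.+1).
    by rewrite [RHS]big_ord_recl !qb0; congr (_ + _); apply: eq_bigr => i _; rewrite /bump /= add1n.
  rewrite big_ord_recr /= qb_gt // !mul0r addr0 mulr_sumr.
  apply: eq_bigr => k _.
  have hk := ltn_ord k.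
  rewrite /EE (_ : (n.+1 - k = (n - k).+1)%N); last by lia.
  rewrite big_ord_recr /=.
  rewrite (_ : (c + k + 1 + (n - k) = c + n.+1)%N); last by lia.
  ring.
have hB : \sum_(i < n.+1) q ^ (2 * (n.+1%:Z - i.+1%:Z)) * qb n i * p ^+ (i.+1 * i.+1 + c * i.+1) * EE c i.+1 n.+1
   = p ^+ (c + n.+1) * \sum_(k < n.+1) qb n k%:Z * p ^+ (k * k + c.+1 * k) * EE c.+1 k n.
  rewrite mulr_sumr; apply: eq_bigr => k _.
  have hk := ltn_ord k.
  rewrite (_ : 2 * (n.+1%:Z - k.+1%:Z) = (2 * (n - k))%N%:Z); last by lia.
  rewrite -exprnP exprM.
  have -> : EE c k.+1 n.+1 = EE c.+1 k n.
    rewrite /EE subSS; apply: eq_bigr => i _; congr (1 - p ^+ _); lia.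
  have ex : p ^+ (n - k) * p ^+ (k.+1 * k.+1 + c * k.+1) = p ^+ (c + n.+1) * p ^+ (k * k + c.+1 * k).
    by rewrite -!exprD; congr (_ ^+ _); lia.
  apply: etrans (_ : _ = qb n k * (p ^+ (n - k) * p ^+ (k.+1 * k.+1 + c * k.+1)) * EE c.+1 k n) _.
    by ring.
  rewrite ex; ring.
rewrite hA hB !IH; ring.
Qed.

Lemma qfac_split a b : qfac p (a + b) = qfac p a * \prod_(i < b) (1 - p ^+ (a + 1 + i)).
Proof.
elim: b => [|b IH]; first by rewrite addn0 big_ord0 mulr1.
rewrite addnS qfacS IH big_ord_recr /= mulrA.
by congr (_ * (1 - p ^+ _)); lia.
Qed.

Lemma Kp n c :
  \sum_(k < n.+1) p ^+ (k * k + c * k) * W k * W (n - k) * W (c + k) = W n * W (n + c).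
Proof.
have := Sid n c.
have e : forall k : 'I_n.+1, qb n k%:Z * p ^+ (k * k + c * k) * EE c k n
   = (qfac p n * qfac p (c + n)) * (p ^+ (k * k + c * k) * W k * W (n - k) * W (c + k)).
  move=> k; have hk := ltn_ord k.
  rewrite qb_nat; last by lia.
  have -> : qfac p (c + n) = qfac p (c + k) * EE c k n.
    rewrite /EE (_ : (c + n = (c + k) + (n - k))%N); last by lia.
    rewrite qfac_split; congr (_ * _); apply: eq_bigr => i _; congr (1 - p ^+ _); lia.
  rewrite /W. field. by rewrite !qfac_neq0.
under eq_bigr => k _ do rewrite e.
rewrite -mulr_sumr => h.
have hn : qfac p n * qfac p (c + n) != 0 by rewrite mulf_neq0 ?qfac_neq0.
apply: (mulfI hn); rewrite h /W addnC.
by field; rewrite !qfac_neq0.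
Qed.

Lemma sum_tri L (F : nat -> nat -> R) :
  \sum_(m < L.+1) \sum_(r < m.+1) F m r
  = \sum_(r < L.+1) \sum_(k < (L - r).+1) F (r + k)%N r.
Proof.
elim: L => [|L IH].
  by rewrite !big_ord_recl !big_ord0 /= addn0.
rewrite big_ord_recr /= IH.
have e : forall r : 'I_L.+2, \sum_(k < (L.+1 - r).+1) F (r + k)%N r
    = \sum_(k < (L.+1 - r)) F (r + k)%N r + F L.+1 r.
  move=> r; rewrite big_ord_recr /=; congr (_ + F _ _).
  have := ltn_ord r; lia.
rewrite [RHS](eq_bigr _ (fun r _ => e r)) [RHS]big_split /=.
rewrite [in RHS]big_ord_recr /=.
rewrite subnn big_ord0 addr0.
congr (_ + _).
apply: eq_bigr => r _.
have hr := ltn_ord r.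
by rewrite (_ : (L.+1 - r = (L - r).+1)%N) //; lia.
Qed.

Lemma bailey_step al be : Bailey al be ->
  Bailey (fun r => p ^+ (r * r + r) * al r)
         (fun L => \sum_(m < L.+1) p ^+ (m * m + m) * be m * W (L - m)).
Proof.
move=> hb L.
pose F := fun m r : nat => p ^+ (m * m + m) * al r * W (m - r) * W (m + r).+1 * W (L - m).
transitivity (\sum_(m < L.+1) \sum_(r < m.+1) F m r).
  apply: eq_bigr => m _; rewrite hb mulr_sumr mulr_suml; apply: eq_bigr => r _.
  rewrite /F; ring.
rewrite sum_tri; apply: eq_bigr => r _.
have hr := ltn_ord r.
have := Kp (L - r) (2 * r).+1.
rewrite (_ : (L - r + (2 * r).+1 = (L + r).+1)%N); last by lia.
move=> hK.
transitivity (p ^+ (r * r + r) * al r *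
   \sum_(k < (L - r).+1) p ^+ (k * k + (2 * r).+1 * k) * W k * W (L - r - k) * W ((2 * r).+1 + k)).
  rewrite mulr_sumr; apply: eq_bigr => k _.
  have hk := ltn_ord k.
  rewrite /F.
  rewrite (_ : (r + k - r = k)%N); last by lia.
  rewrite (_ : (r + k + r).+1 = ((2 * r).+1 + k))%N; last by lia.
  rewrite (_ : (L - (r + k) = L - r - k)%N); last by lia.
  rewrite (_ : ((r + k) * (r + k) + (r + k) = (r * r + r) + (k * k + (2 * r).+1 * k))%N); last by lia.
  rewrite exprD; ring.
rewrite hK; ring.
Qed.

Lemma Bailey_ext al al' be : Bailey al be -> (forall r, al r = al' r) -> Bailey al' be.
Proof. by move=> h e L; rewrite h; apply: eq_bigr => r _; rewrite e. Qed.

Fixpoint beta (v : nat) : nat -> R :=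
  match v with
  | 0 => be0
  | v'.+1 => fun L => \sum_(m < L.+1) p ^+ (m * m + m) * beta v' m * W (L - m)
  end.

Definition alpha (v r : nat) : R := p ^+ ((r * r + r) * v) * al0 r.

Lemma chain v : Bailey (alpha v) (beta v).
Proof.
elim: v => [|v IH].
  by apply: (Bailey_ext base_pair) => r; rewrite /alpha muln0 expr0 mul1r.
apply: (Bailey_ext (bailey_step IH)) => r.
by rewrite /alpha mulnS [in RHS]exprD mulrA.
Qed.

Definition invW (z : int) : R := inv_qfac p z.

Lemma invW_nat (n : nat) : invW n%:Z = W n.
Proof. by []. Qed.

Lemma invW_neg (z : int) : z < 0 -> invW z = 0.
Proof. by case: z. Qed.

Definition TT (v : nat) (n : nat -> nat) (M : nat) : R :=
  p ^+ (\sum_(i < v) Nsum v n i * (Nsum v n i).+1)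
  * (\prod_(i < v.-1) W (n i)) * be0 (n v.-1) * invW (M%:Z - (Nsum v n 0)%:Z).

Definition ncons (x : nat) (n : nat -> nat) (k : nat) : nat :=
  match k with 0 => x | k'.+1 => n k' end.

Lemma Nsum_consS v x n i : Nsum v.+1 (ncons x n) i.+1 = Nsum v n i.
Proof. by rewrite /Nsum big_add1 /=. Qed.

Lemma Nsum_cons0 v x n : Nsum v.+1 (ncons x n) 0 = (x + Nsum v n 0)%N.
Proof. by rewrite /Nsum big_nat_recl // big_add1 /=. Qed.

Lemma TT_cons v x n M : (0 < v)%N ->
  TT v.+1 (ncons x n) M
  = p ^+ ((x + Nsum v n 0) * (x + Nsum v n 0).+1)
    * invW (M%:Z - (x + Nsum v n 0)%N%:Z) * TT v n (x + Nsum v n 0)%N.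
Proof.
case: v => [//|v] _.
rewrite /TT big_ord_recl /= Nsum_cons0.
under eq_bigr => i _ do rewrite /bump /= ?add1n Nsum_consS.
rewrite exprD [\prod_(i < v.+1) _]big_ord_recl /=.
under [\prod_(i < v) _]eq_bigr => i _ do rewrite /bump /= ?add1n /=.
rewrite (_ : (x + Nsum v.+1 n 0)%N%:Z - (Nsum v.+1 n 0)%:Z = x%:Z); last by lia.
rewrite invW_nat.
ring.
Qed.

Lemma TT_small v n M : (M < Nsum v n 0)%N -> TT v n M = 0.
Proof. by move=> h; rewrite /TT invW_neg ?mulr0 //; lia. Qed.

Lemma sum_window (G : nat -> R) a M K :
  (forall m, (m < a)%N -> G m = 0) -> (forall m, (M < m)%N -> G m = 0) -> (M <= K)%N ->
  \sum_(x < K.+1) G (x + a)%N = \sum_(m < M.+1) G m.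
Proof.
move=> h1 h2 hMK.
have e1 : \sum_(m < a + K.+1) G m = \sum_(x < K.+1) G (x + a)%N.
  rewrite big_split_ord /= big1 ?add0r; last by move=> i _; apply: h1.
  by apply: eq_bigr => i _; rewrite addnC.
have e2 : \sum_(m < a + K.+1) G m = \sum_(m < M.+1) G m.
  rewrite (_ : (a + K.+1 = M.+1 + (a + K - M))%N); last by lia.
  rewrite big_split_ord /= [X in _ + X]big1 ?addr0 // => i _.
  by apply: h2; lia.
by rewrite -e1 e2.
Qed.

Definition fcons v K (x : 'I_K.+1) (g : {ffun 'I_v -> 'I_K.+1}) : {ffun 'I_v.+1 -> 'I_K.+1} :=
  [ffun i : 'I_v.+1 => if unlift ord0 i is Some j then g j else x].

Lemma ext_cons_pt v K x g k : ext (fcons x g) k = ncons x (@ext v K g) k.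
Proof.
case: k => [|k]; rewrite /ext /=.
- case: insubP => [i _ hi | hn]; last by [].
  have -> : i = ord0 by apply: val_inj.
  by rewrite ffunE unlift_none.
- case: insubP => [i hik hi | hn].
  + rewrite ffunE; case: unliftP => [j hj | hj]; last by rewrite hj in hi.
    have hjk : nat_of_ord j = k by move: hi; rewrite hj /= /bump /=; lia.
    case: insubP => [j' hj' hj'k | hn].
      by congr (nat_of_ord (g _)); apply: val_inj; rewrite /= hjk hj'k.
    by move: hn; rewrite -hjk ltn_ord.
  + case: insubP => [j' hj' _ | _] //.
    by move: hn; rewrite ltnS hj'.
Qed.

Lemma ext_cons v K x g : ext (fcons x g) = ncons x (@ext v K g).
Proof. by apply: functional_extensionality => k; apply: ext_cons_pt. Qed.

Lemma sum_ffun_cons v K (F : (nat -> nat) -> R) :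
  \sum_(f : {ffun 'I_v.+1 -> 'I_K.+1}) F (ext f)
  = \sum_(x < K.+1) \sum_(g : {ffun 'I_v -> 'I_K.+1}) F (ncons x (ext g)).
Proof.
rewrite pair_bigA /=.
rewrite (reindex (fun pr : 'I_K.+1 * {ffun 'I_v -> 'I_K.+1} => fcons pr.1 pr.2)) /=.
  by apply: eq_bigr => pr _; rewrite ext_cons.
apply: onW_bij.
exists (fun f : {ffun 'I_v.+1 -> 'I_K.+1} => (f ord0, [ffun j => f (lift ord0 j)])).
- move=> [x g] /=; rewrite /fcons ffunE unlift_none; congr (_, _).
  by apply/ffunP => j; rewrite !ffunE liftK.
- move=> f /=; apply/ffunP => i; rewrite /fcons !ffunE.
  by case: unliftP => [j ->|->] //; rewrite ffunE.
Qed.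

Lemma TT1 x m M : TT 1 (ncons x m) M = p ^+ (x * x.+1) * be0 x * invW (M%:Z - x%:Z).
Proof.
rewrite /TT big_ord1 big_ord0 mulr1 /Nsum big_nat1 /=.
by [].
Qed.

Lemma multisum v K M : (0 < v)%N -> (M <= K)%N ->
  \sum_(f : {ffun 'I_v -> 'I_K.+1}) TT v (ext f) M = beta v M.
Proof.
case: v => [//|v] _.
elim: v M => [|v IH] M hMK.
- rewrite (@sum_ffun_cons _ _ (fun n => TT 1 n M)).
  under eq_bigr => x _ do under eq_bigr => g _ do rewrite TT1.
  under eq_bigr => x _ do rewrite sumr_const card_ffun !card_ord expn0 mulr1n.
  pose G := fun m : nat => p ^+ (m * m.+1) * be0 m * invW (M%:Z - m%:Z).
  transitivity (\sum_(x < K.+1) G (x + 0)%N).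
    by apply: eq_bigr => x _; rewrite addn0.
  rewrite (sum_window (G := G) (a := 0) (M := M)) //; last first.
    by move=> m hm; rewrite /G invW_neg ?mulr0 //; lia.
  apply: eq_bigr => m _ /=.
  have hm := ltn_ord m.
  rewrite /G (_ : M%:Z - m%:Z = (M - m)%N%:Z); last by lia.
  by rewrite invW_nat mulnS addnC.
- rewrite (@sum_ffun_cons _ _ (fun n => TT v.+2 n M)).
  under eq_bigr => x _ do under eq_bigr => g _ do rewrite TT_cons //.
  rewrite exchange_big.
  transitivity (\sum_(g : {ffun 'I_v.+1 -> 'I_K.+1}) \sum_(m < M.+1)
       p ^+ (m * m.+1) * invW (M%:Z - m%:Z) * TT v.+1 (ext g) m).
    apply: eq_big => // g _.
    pose G := fun m : nat => p ^+ (m * m.+1) * invW (M%:Z - m%:Z) * TT v.+1 (ext g) m.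
    rewrite -(sum_window (G := G) (a := Nsum v.+1 (ext g) 0) (M := M) (K := K)) //.
    + by move=> m hm; rewrite /G TT_small ?mulr0.
    + by move=> m hm; rewrite /G invW_neg ?mulr0 ?mul0r //; lia.
  have -> : beta v.+2 M = \sum_(m < M.+1) p ^+ (m * m + m) * beta v.+1 m * W (M - m) by [].
  rewrite exchange_big.
  apply: eq_big => // m _.
  have hm := ltn_ord m.
  rewrite -IH; last by lia.
  rewrite mulr_sumr mulr_suml; apply: eq_bigr => g _.
  rewrite (_ : M%:Z - m%:Z = (M - m)%N%:Z); last by lia.
  rewrite invW_nat mulnS [(m + _)%N]addnC; ring.
Qed.

Lemma lhs_TT v L n : lhs_term q v L n = qfac p (2 * L).+1 * TT v n L.
Proof.
rewrite /lhs_term /TT /be0 /CC /W /invW /=.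
rewrite prodfV exprD !addn1 invfM.
ring.
Qed.

Definition Fr (v : nat) (j : int) : R :=
  (-1) ^ j * q ^ ((2 * v + 1)%:Z * j ^+ 2 + (2 * v)%:Z * j - 1) * leg3 R j.

Lemma Fr_cc v j : Fr v j = q ^ ((2 * v)%:Z * (j * j + j)) * cc j.
Proof.
rewrite /Fr /cc.
rewrite (_ : (2 * v + 1)%:Z * j ^+ 2 + (2 * v)%:Z * j - 1 = (2 * v)%:Z * (j * j + j) + (j * j - 1)).
  rewrite expfzDr //; ring.
rewrite expr2; lia.
Qed.

Lemma Fr_alpha v (r : nat) : Fr v r%:Z + Fr v (- r%:Z - 1) = alpha v r.
Proof.
rewrite !Fr_cc /alpha /al0.
rewrite (_ : (- r%:Z - 1) * (- r%:Z - 1) + (- r%:Z - 1) = r%:Z * r%:Z + r%:Z); last by lia.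
rewrite (_ : (2 * v)%:Z * (r%:Z * r%:Z + r%:Z) = ((2 * ((r * r + r) * v)))%N%:Z); last by lia.
by rewrite -exprnP exprM mulrDr.
Qed.

Theorem main_aux (v L : nat) : (1 <= v)%N ->
  \sum_(f : {ffun 'I_v -> 'I_L.+1}) lhs_term q v L (ext f)
  = \sum_(0 <= k < 2 * L + 3) rhs_term q v L (k%:Z - (L + 1)%:Z).
Proof.
move=> hv.
under eq_bigr => f _ do rewrite lhs_TT.
rewrite -mulr_sumr multisum // (chain v L).
rewrite big_mkord (_ : (2 * L + 3 = ((2 * L).+2).+1)%N); last by lia.
rewrite [RHS]big_ord_recr /=.
have hlast : rhs_term q v L ((2 * L).+2%:Z - (L + 1)%:Z) = 0.
  rewrite /rhs_term (_ : (2 * L + 1)%N = (2 * L).+1); last by lia.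
  rewrite -/(qb (2 * L).+1 _) qb_out ?mulr0 //; lia.
rewrite hlast addr0.
have e : forall k : 'I_(2 * L).+2, rhs_term q v L (k%:Z - (L + 1)%:Z)
    = Fr v (k%:Z - L.+1%:Z) * qb (2 * L).+1 (L%:Z - (k%:Z - L.+1%:Z)).
  move=> k; rewrite /rhs_term /Fr (_ : (2 * L + 1)%N = (2 * L).+1); last by lia.
  by rewrite (_ : (L + 1)%N = L.+1); last by lia.
rewrite (eq_bigr _ (fun k _ => e k)) fold_sum mulr_sumr.
apply: eq_bigr => r _.
have hr := ltn_ord r.
rewrite Fr_alpha (_ : L%:Z - r%:Z = (L - r)%N%:Z); last by lia.
rewrite qb_nat; last by lia.
rewrite (_ : ((2 * L).+1 - (L - r))%N = (L + r).+1); last by lia.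
ring.
Qed.

End S.

Theorem mainTheorem17 (R : fieldType) (q : R) (v L : nat) :
  q != 0 -> (forall k : nat, (0 < k)%N -> q ^+ k != 1) -> (1 <= v)%N ->
  \sum_(f : {ffun 'I_v -> 'I_L.+1}) lhs_term q v L (ext f)
  = \sum_(0 <= k < 2 * L + 3) rhs_term q v L (k%:Z - (L + 1)%:Z).
Proof. by move=> hq hroot hv; apply: main_aux. Qed.
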